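(* For all terms $s,t$ and $m\in\mathbb N$: $s\Downarrow^m t$ holds if and only if $s\succ^\ast_m t$ and $t$ is an abstraction.
   Context: Terms (de Bruijn): $s::=n\mid st\mid\lambda s$, size $|n|=1+n$, $|\lambda s|=1+|s|$, $|st|=1+|s|+|t|$. Substitution $k^k_u=u$, $n^k_u=n$ ($n\ne k$), $(st)^k_u=(s^k_u)(t^k_u)$, $(\lambda s)^k_u=\lambda(s^{k+1}_u)$. Reduction: $(\lambda s)(\lambda t)\succ s^0_{\lambda t}$; $s\succ s'\Rightarrow st\succ s't$; $t\succ t'\Rightarrow(\lambda s)t\succ(\lambda s)t'$. $s\succ^\ast_m t$ means there is a reduction sequence $s=s_0\succ s_1\succ\cdots\succ s_j=t$ ($j\ge0$) with $\max_{0\le i\le j}|s_i|=m$. The big-step relation $s\Downarrow^m t$ is defined inductively: $\lambda s\Downarrow^{|\lambda s|}\lambda s$; and if $s\Downarrow^{m_1}\lambda s'$, $t\Downarrow^{m_2}\lambda t'$, $s'^0_{\lambda t'}\Downarrow^{m_3}u$ and $m=\max(1+m_1+|t|,\ 1+|\lambda s'|+m_2,\ m_3)$, then $st\Downarrow^m u$. *)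

(* Defs.v *)
From Stdlib Require Import Arith Lia.

Inductive term : Type :=
| var : nat -> term
| app : term -> term -> term
| lam : term -> term.

Fixpoint size (s : term) : nat :=
  match s with
  | var n => 1 + n
  | app s t => 1 + size s + size t
  | lam s => 1 + size s
  end.

Fixpoint subst (s : term) (k : nat) (u : term) : term :=
  match s with
  | var n => if Nat.eqb n k then u else var n
  | app s t => app (subst s k u) (subst t k u)
  | lam s => lam (subst s (S k) u)
  end.

Inductive step : term -> term -> Prop :=
| stepBeta s t : step (app (lam s) (lam t)) (subst s 0 (lam t))
| stepAppL s s' t : step s s' -> step (app s t) (app s' t)
| stepAppR s t t' : step t t' -> step (app (lam s) t) (app (lam s) t').

(* red_max s t m : there is a reduction sequence s = s_0 > s_1 > ... > s_j = t
   (j >= 0) with m = max_i |s_i|. *)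
Inductive red_max : term -> term -> nat -> Prop :=
| red_refl s : red_max s s (size s)
| red_cons s s' t m : step s s' -> red_max s' t m -> red_max s t (Nat.max (size s) m).

Definition is_abs (t : term) : Prop := exists t', t = lam t'.

Inductive eval : term -> nat -> term -> Prop :=
| evalLam s : eval (lam s) (size (lam s)) (lam s)
| evalApp s t s' t' u m1 m2 m3 :
    eval s m1 (lam s') ->
    eval t m2 (lam t') ->
    eval (subst s' 0 (lam t')) m3 u ->
    eval (app s t) (Nat.max (1 + m1 + size t) (Nat.max (1 + size (lam s') + m2) m3)) u.

(* Main.v *)
Require Import Defs.
From Stdlib Require Import Arith Lia.

Lemma red_ge_src s t m : red_max s t m -> size s <= m.
Proof. intros H; destruct H; lia. Qed.

Lemma red_ge_tgt s t m : red_max s t m -> size t <= m.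
Proof. intros H; induction H; lia. Qed.

Lemma red_trans a b c m1 m2 : red_max a b m1 -> red_max b c m2 -> red_max a c (Nat.max m1 m2).
Proof.
  intros H; revert c m2; induction H; intros c m2 H2.
  - pose proof (red_ge_src _ _ _ H2). replace (Nat.max (size s) m2) with m2 by lia. exact H2.
  - rewrite <- Nat.max_assoc. econstructor; eauto.
Qed.

Lemma red_appL s t m u : red_max s t m -> red_max (app s u) (app t u) (1 + m + size u).
Proof.
  intros H; induction H.
  - apply red_refl.
  - replace (1 + Nat.max (size s) m + size u) with (Nat.max (size (app s u)) (1 + m + size u))
      by (cbn [size]; lia).
    econstructor; [apply stepAppL; eauto | eauto].
Qed.

Lemma red_appR a t t' m : red_max t t' m -> red_max (app (lam a) t) (app (lam a) t') (1 + size (lam a) + m).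
Proof.
  intros H; induction H.
  - apply red_refl.
  - replace (1 + size (lam a) + Nat.max (size s) m) with (Nat.max (size (app (lam a) s)) (1 + size (lam a) + m))
      by (cbn [size]; lia).
    econstructor; [apply stepAppR; eauto | eauto].
Qed.

Lemma eval_red s m t : eval s m t -> red_max s t m /\ is_abs t.
Proof.
  intros H; induction H.
  - split; [apply red_refl | eexists; reflexivity].
  - destruct IHeval1 as [R1 _], IHeval2 as [R2 _], IHeval3 as [R3 A].
    split; [|exact A].
    pose proof (red_appL _ _ _ t R1) as X1.
    pose proof (red_appR s' _ _ _ R2) as X2.
    assert (X3 : red_max (app (lam s') (lam t')) u
                   (Nat.max (size (app (lam s') (lam t'))) m3))
      by (econstructor; [apply stepBeta | exact R3]).
    pose proof (red_trans _ _ _ _ _ X2 X3) as X23.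
    pose proof (red_trans _ _ _ _ _ X1 X23) as X.
    pose proof (red_ge_tgt _ _ _ R2).
    replace (Nat.max (1 + m1 + size t) (Nat.max (1 + size (lam s') + m2) m3))
      with (Nat.max (1 + m1 + size t)
              (Nat.max (1 + size (lam s') + m2) (Nat.max (size (app (lam s') (lam t'))) m3)))
      by (cbn [size] in *; lia).
    exact X.
Qed.

Lemma eval_ge s m t : eval s m t -> size s <= m.
Proof. intros H; induction H; cbn [size] in *; lia. Qed.

Lemma step_eval s s' : step s s' -> forall m t, eval s' m t -> eval s (Nat.max (size s) m) t.
Proof.
  intros H; induction H; intros m u E.
  - pose proof (evalApp (lam s) (lam t) s t u (size (lam s)) (size (lam t)) m
                  (evalLam s) (evalLam t) E) as X.
    replace (Nat.max (size (app (lam s) (lam t))) m) with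
      (Nat.max (1 + size (lam s) + size (lam t)) (Nat.max (1 + size (lam s) + size (lam t)) m))
      by (cbn [size]; lia).
    exact X.
  - inversion E as [|? ? ? ? ? ? ? ? E1 E2 E3]; subst.
    pose proof (IHstep _ _ E1) as X.
    pose proof (evalApp _ _ _ _ _ _ _ _ X E2 E3) as Y.
    match goal with |- eval _ ?M _ => match type of Y with eval _ ?N _ =>
      replace M with N by (cbn [size]; lia) end end.
    exact Y.
  - inversion E as [|? ? ? ? ? ? ? ? E1 E2 E3]; subst.
    inversion E1; subst.
    pose proof (IHstep _ _ E2) as X.
    pose proof (eval_ge _ _ _ E2).
    pose proof (evalApp _ _ _ _ _ _ _ _ E1 X E3) as Y.
    match goal with |- eval _ ?M _ => match type of Y with eval _ ?N _ =>
      replace M with N by (cbn [size] in *; lia) end end.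
    exact Y.
Qed.

Lemma red_eval s t m : red_max s t m -> is_abs t -> eval s m t.
Proof.
  intros H A; induction H.
  - destruct A as [t' ->]. apply evalLam.
  - eapply step_eval; eauto.
Qed.

Theorem lemmaA4 : forall (s t : term) (m : nat),
  eval s m t <-> (red_max s t m /\ is_abs t).
Proof.
  intros s t m; split.
  - apply eval_red.
  - intros [H A]; apply red_eval; auto.
Qed.
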